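(* Suppose $\mathcal{H}_\kappa(L_1,L_2)$ is regular. Let $s\in S$ and let $A_s\xrightarrow{w}F$ be a path in $\mathcal{A}$ from $A_s$ to a final state $F$. Then $w$ is a prefix of some word in $v_s^+$. In addition, the word $v_s$ is uniquely determined, and the loop $A_s\xrightarrow{v_s}A_s$ visits every state $B\in s\setminus\{A_s\}$ exactly once; thus it is a Hamiltonian cycle of $s$ and $|v_s|=N_s$.
   Context: $\Sigma$ is a finite alphabet with at least two letters with an involution $a\mapsto\bar a$ ($\bar{\bar a}=a$), extended to words by $\overline{a_1\cdots a_m}=\bar a_m\cdots\bar a_1$ and to languages elementwise. $\kappa$ is a fixed positive integer. $\mathcal{H}_\kappa(L_1,L_2)=\{\gamma\alpha\beta\bar\alpha\bar\gamma:|\alpha|\ge\kappa,\ \gamma\alpha\beta\bar\alpha\in L_1\text{ or }\alpha\beta\bar\alpha\bar\gamma\in L_2\}$. $L_1,L_2$ are regular; $\mathcal{A}_1=(Q_1,\Sigma,E_1,\{q_{01}\},F_1)$ is a complete DFA accepting $L_1$, $\mathcal{A}_2=(Q_2,\Sigma,E_2,\{q_{02}\},F_2)$ a complete DFA accepting $\overline{L_2}$; $p\cdot w$ is the state reached from $p$ on $w$. Construction of $\mathcal{A}$: $Q_{12}=\{(q_{01}\cdot w,q_{02}\cdot w):w\in\Sigma^*\}$ with $(p_1,p_2)\cdot w=(p_1\cdot w,p_2\cdot w)$. For $(p_1,p_2,q_1,q_2)\in Q_1\times Q_2\times Q_1\times Q_2$ let $B(p_1,p_2,q_1,q_2)=\{w:p_1\cdot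 w=q_1,\ p_2\cdot\bar w=q_2\}$; the quadruple is a basic bridge if this set is nonempty. States of $\mathcal{A}$ are all $((p_1,p_2),q_1,q_2,\ell)$ with $(p_1,p_2)\in Q_{12}$, $q_i\in Q_i$, $\ell\in\{0,\dots,\kappa\}$, $(p_1,p_2,q_1,q_2)$ a basic bridge. For $a\in\Sigma$, $P\in Q_{12}$, $q_i\in Q_i$, there is an $a$-arc from $(P,q_1\cdot\bar a,q_2\cdot\bar a,\ell)$ to $(P\cdot a,q_1,q_2,\ell')$, provided both are states, exactly when: $\ell=\ell'=0$ and $q_1\cdot\bar a\notin F_1$, $q_2\cdot\bar a\notin F_2$; or $\ell=0,\ell'=1$ and ($q_1\cdot\bar a\in F_1$ or $q_2\cdot\bar a\in F_2$); or $1\le\ell<\kappa$ and $\ell'=\ell+1$. Initial states: $((q_{01},q_{02}),q_1',q_2',0)$; final states: those with $\ell=\kappa$. $\mathcal{A}$ is trimmed: states not reachable from an initial state, or from which no final state is reachable, are removed. $S$ is the set of non-trivial strongly connected components of $\mathcal{A}$, i.e. those containing a path $A\xrightarrow{v}A$ with $v$ nonempty; for $s\in S$, $N_s$ is the number of states in $s$. A linear order on the states of $\mathcal{A}$ is fixed; $A_s$ is the least state in $s$, and $v_s$ is a shortest nonempty word with a path $A_s\xrightarrow{v_s}A_s$. *)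

(* Defs.v *)
From mathcomp Require Import all_boot.
Set Implicit Arguments. Unset Strict Implicit. Unset Printing Implicit Defensive.

Record dfa (Sigma : finType) := Dfa {
  dstate : finType;
  dinit : dstate;
  ddelta : dstate -> Sigma -> dstate;
  dfinal : {set dstate} }.

Section Words.
Variable Sigma : finType.
Variable bar : Sigma -> Sigma.

Definition wbar (w : seq Sigma) : seq Sigma := rev (map bar w).

Definition lang := seq Sigma -> Prop.

Definition lbar (L : lang) : lang := fun w => exists u, L u /\ w = wbar u.

Definition dtrans (A : dfa Sigma) (p : dstate A) (w : seq Sigma) : dstate A :=
  foldl (@ddelta _ A) p w.

Definition dlang (A : dfa Sigma) : lang :=
  fun w => dtrans (dinit A) w \in dfinal A.

Definition regular (L : lang) : Prop :=
  exists B : dfa Sigma, forall w, L w <-> dlang B w.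

Definition Hk (kappa : nat) (L1 L2 : lang) : lang := fun x =>
  exists g al be : seq Sigma,
    x = g ++ al ++ be ++ wbar al ++ wbar g /\ kappa <= size al /\
    (L1 (g ++ al ++ be ++ wbar al) \/ L2 (al ++ be ++ wbar al ++ wbar g)).

(* Generic runs of a (nondeterministic) labelled graph: xs = states after each letter *)
Fixpoint grun (T : Type) (node : T -> Prop) (arc : Sigma -> T -> T -> Prop)
    (X : T) (w : seq Sigma) (xs : seq T) : Prop :=
  match w, xs with
  | [::], [::] => node X
  | a :: w', Y :: xs' => arc a X Y /\ grun node arc Y w' xs'
  | _, _ => False
  end.

Definition gpath (T : Type) (node : T -> Prop) (arc : Sigma -> T -> T -> Prop)
    (X : T) (w : seq Sigma) (Y : T) : Prop :=
  exists xs, grun node arc X w xs /\ last X xs = Y.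

Section Construction.
Variables (kappa : nat) (A1 A2 : dfa Sigma).

Definition St : finType :=
  ((dstate A1 * dstate A2) * dstate A1 * dstate A2 * 'I_kappa.+1)%type.

Definition inQ12 (p1 : dstate A1) (p2 : dstate A2) : Prop :=
  exists w, p1 = dtrans (dinit A1) w /\ p2 = dtrans (dinit A2) w.

Definition basic_bridge (p1 : dstate A1) (p2 : dstate A2)
    (q1 : dstate A1) (q2 : dstate A2) : Prop :=
  exists w, dtrans p1 w = q1 /\ dtrans p2 (wbar w) = q2.

Definition isState (X : St) : Prop :=
  let: (P, q1, q2, l) := X in inQ12 P.1 P.2 /\ basic_bridge P.1 P.2 q1 q2.

Definition rawarc (a : Sigma) (X Y : St) : Prop :=
  isState X /\ isState Y /\
  let: (P, r1, r2, l) := X in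
  let: (P', q1, q2, l') := Y in
  P' = (ddelta P.1 a, ddelta P.2 a) /\
  r1 = ddelta q1 (bar a) /\ r2 = ddelta q2 (bar a) /\
  [\/ [/\ val l = 0, val l' = 0, r1 \notin dfinal A1 & r2 \notin dfinal A2],
      [/\ val l = 0, val l' = 1 & (r1 \in dfinal A1) || (r2 \in dfinal A2)]
    | [/\ 1 <= val l, val l < kappa & val l' = (val l).+1]].

Definition initialSt (X : St) : Prop :=
  isState X /\ X.1.1.1 = (dinit A1, dinit A2) /\ val X.2 = 0.

Definition finalSt (X : St) : Prop := val X.2 = kappa.

Definition upath := gpath isState rawarc.

Definition inA (X : St) : Prop :=
  (exists I w, initialSt I /\ upath I w X) /\
  (exists F w, finalSt F /\ upath X w F).

Definition arcA (a : Sigma) (X Y : St) : Prop := inA X /\ inA Y /\ rawarc a X Y.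

Definition runA := grun inA arcA.
Definition pathA := gpath inA arcA.
Definition reachA (X Y : St) : Prop := exists w, pathA X w Y.

Definition sccA (s : {set St}) : Prop :=
  exists X, inA X /\ forall Y, Y \in s <-> (reachA X Y /\ reachA Y X).

Definition nontrivial_sccA (s : {set St}) : Prop :=
  sccA s /\ exists X v, X \in s /\ v != [::] /\ pathA X v X.

Definition shortest_loop (X : St) (v : seq Sigma) : Prop :=
  v != [::] /\ pathA X v X /\
  forall u, u != [::] -> pathA X u X -> size v <= size u.

End Construction.
End Words.

(* Main.v *)
Require Import Defs.
From mathcomp Require Import all_boot zify.
Set Implicit Arguments. Unset Strict Implicit. Unset Printing Implicit Defensive.

Section Gen.
Variables (Sigma : finType) (T : Type) (node : T -> Prop) (arc : Sigma -> T -> T -> Prop).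
Hypothesis Harc : forall a X Y, arc a X Y -> node X /\ node Y.

Lemma grun_size X w xs : grun node arc X w xs -> size xs = size w.
Proof.
elim: w X xs => [|a w IH] X [|Y xs] //= [_ H]; by rewrite (IH _ _ H).
Qed.

Lemma grun_node X w xs : grun node arc X w xs -> node X.
Proof. case: w xs => [|a w] [|Y xs] //= [/Harc[]]. by []. Qed.

Lemma grun_cat X w1 w2 xs1 xs2 : size xs1 = size w1 ->
  (grun node arc X (w1 ++ w2) (xs1 ++ xs2) <->
   grun node arc X w1 xs1 /\ grun node arc (last X xs1) w2 xs2).
Proof.
elim: w1 X xs1 => [|a w1 IH] X [|Y xs1] //= Hs.
  split; [move=> H; split => //; exact: grun_node H | by case].
case: Hs => /IH Hs; split.
  by case=> Ha /Hs [H1 H2].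
by case=> [[Ha H1] H2]; split => //; apply/Hs.
Qed.

Lemma gpath_cat X w1 w2 Y Z : gpath node arc X w1 Y -> gpath node arc Y w2 Z ->
  gpath node arc X (w1 ++ w2) Z.
Proof.
case=> xs1 [H1 <-] [xs2 [H2 <-]]; exists (xs1 ++ xs2); split.
  by apply/grun_cat; [exact: grun_size H1|].
by rewrite last_cat.
Qed.

Lemma gpath_split X w1 w2 Z : gpath node arc X (w1 ++ w2) Z ->
  exists Y, gpath node arc X w1 Y /\ gpath node arc Y w2 Z.
Proof.
case=> xs [H <-].
have Hs := grun_size H; rewrite size_cat in Hs.
rewrite -(cat_take_drop (size w1) xs) in H *.
have Hs1 : size (take (size w1) xs) = size w1 by rewrite size_takel // Hs leq_addr.
case: (proj1 (grun_cat _ _ _ Hs1) H) => H1 H2.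
exists (last X (take (size w1) xs)); split; first by exists (take (size w1) xs).
by exists (drop (size w1) xs); rewrite last_cat.
Qed.

Lemma gpath_nil X Y : gpath node arc X [::] Y -> X = Y /\ node X.
Proof. by case=> [[|Z xs] []] //= H <-. Qed.

Lemma gpath_cons X a w Z : gpath node arc X (a :: w) Z <->
  exists Y, arc a X Y /\ gpath node arc Y w Z.
Proof.
split.
  by case=> [[|Y xs] []] //= [Ha H] <-; exists Y; split => //; exists xs.
by case=> Y [Ha [xs [H <-]]]; exists (Y :: xs).
Qed.

Lemma gpath_end X w Y : gpath node arc X w Y -> node Y.
Proof.
case=> xs [H <-]; elim: w X xs H => [|a w IH] X [|Z xs] //= [_ H].
exact: IH H.
Qed.

End Gen.

Lemma grun_mono (Sigma : finType) (T : Type) (node node' : T -> Prop)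
  (arc arc' : Sigma -> T -> T -> Prop) :
  (forall X, node X -> node' X) -> (forall a X Y, arc a X Y -> arc' a X Y) ->
  forall X w xs, grun node arc X w xs -> grun node' arc' X w xs.
Proof.
move=> Hn Ha X w; elim: w X => [|a w IH] X [|Y xs] //=; first exact: Hn.
by case=> /Ha H1 /IH H2.
Qed.

Section Spec.
Variables (Sigma : finType) (bar : Sigma -> Sigma) (kappa : nat) (A1 A2 : dfa Sigma).
Local Notation St := (St kappa A1 A2).
Definition Pof (X : St) := X.1.1.1.
Definition q1 (X : St) := X.1.1.2.
Definition q2 (X : St) := X.1.2.
Definition lv (X : St) : nat := nat_of_ord X.2.
Local Notation wb := (wbar bar).
Local Notation raw := (@rawarc _ bar kappa A1 A2).
Local Notation up := (@upath _ bar kappa A1 A2).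

Lemma St_eq (X Y : St) : Pof X = Pof Y -> q1 X = q1 Y -> q2 X = q2 Y -> lv X = lv Y -> X = Y.
Proof.
case: X => [[[P r1] r2] l]; case: Y => [[[P' r1'] r2'] l'].
rewrite /Pof /q1 /q2 /lv /= => -> -> -> /val_inj -> //.
Qed.

Lemma rawE a X Y : raw a X Y ->
  [/\ isState bar X, isState bar Y,
      Pof Y = (ddelta (Pof X).1 a, ddelta (Pof X).2 a),
      q1 X = ddelta (q1 Y) (bar a) /\ q2 X = ddelta (q2 Y) (bar a) &
      [\/ [/\ lv X = 0, lv Y = 0, q1 X \notin dfinal A1 & q2 X \notin dfinal A2],
          [/\ lv X = 0, lv Y = 1 & (q1 X \in dfinal A1) || (q2 X \in dfinal A2)]
        | [/\ 1 <= lv X & lv Y = (lv X).+1]]].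
Proof.
case: X => [[[P r1] r2] l]; case: Y => [[[P' r1'] r2'] l'].
rewrite /rawarc /Pof /q1 /q2 /lv /= => -[HX [HY [E1 [E2 [E3 H]]]]]; subst.
split => //; case: H => [[-> -> ? ?]|[-> -> ?]|[? ? ->]]; by [constructor 1|constructor 2|constructor 3].
Qed.

Lemma raw_lv a X Y : raw a X Y -> lv X = (lv Y).-1.
Proof. by case/rawE => _ _ _ _ [[-> ->]|[-> ->]|[_ ->]]. Qed.

Lemma raw_node a X Y : raw a X Y -> isState bar X /\ isState bar Y.
Proof. by case/rawE. Qed.

Lemma up_nil X Y : up X [::] Y -> X = Y /\ isState bar X.
Proof. exact: gpath_nil. Qed.
Lemma up_cons X a w Z : up X (a :: w) Z <-> exists Y, raw a X Y /\ up Y w Z.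
Proof. exact: gpath_cons. Qed.
Lemma up_split X w1 w2 Z : up X (w1 ++ w2) Z -> exists Y, up X w1 Y /\ up Y w2 Z.
Proof. move=> H. have := @gpath_split _ _ _ _ raw_node X w1 w2 Z. apply. exact H. Qed.
Lemma up_cat X w1 w2 Y Z : up X w1 Y -> up Y w2 Z -> up X (w1 ++ w2) Z.
Proof. move=> H1 H2. exact: (@gpath_cat _ _ _ _ raw_node X w1 w2 Y Z H1 H2). Qed.
Lemma up_end X w Y : up X w Y -> isState bar Y.
Proof. exact: gpath_end. Qed.

Lemma wbar_cons a w : wb (a :: w) = rcons (wb w) (bar a).
Proof. by rewrite /wbar /= rev_cons. Qed.

Lemma wbar_cat w1 w2 : wb (w1 ++ w2) = wb w2 ++ wb w1.
Proof. by rewrite /wbar map_cat rev_cat. Qed.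

Lemma dtrans_cat (A : dfa Sigma) (p : dstate A) w1 w2 :
  dtrans p (w1 ++ w2) = dtrans (dtrans p w1) w2.
Proof. by rewrite /dtrans foldl_cat. Qed.

Lemma dtrans_rcons (A : dfa Sigma) (p : dstate A) w a :
  dtrans p (rcons w a) = ddelta (dtrans p w) a.
Proof. by rewrite /dtrans foldl_rcons. Qed.

Lemma upP X w Y : up X w Y -> Pof Y = (dtrans (Pof X).1 w, dtrans (Pof X).2 w).
Proof.
elim: w X => [|a w IH] X.
  by case/up_nil => -> _; case: (Pof Y).
case/up_cons => Z [/rawE [_ _ HZ _ _] /IH ->]; by rewrite HZ.
Qed.

Lemma upQ X w Y : up X w Y -> q1 X = dtrans (q1 Y) (wb w) /\ q2 X = dtrans (q2 Y) (wb w).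
Proof.
elim: w X => [|a w IH] X.
  by case/up_nil => ->.
case/up_cons => Z [/rawE [_ _ _ [-> ->] _] /IH [-> ->]].
by rewrite wbar_cons !dtrans_rcons.
Qed.

Lemma upL X w Y : up X w Y -> lv Y <= lv X + size w /\ (1 <= lv X -> lv Y = lv X + size w).
Proof.
elim: w X => [|a w IH] X.
  by case/up_nil => -> _; rewrite addn0.
case/up_cons => Z [/rawE [_ _ _ _ H] /IH [H1 H2]] /=.
case: H => [[-> HZ _ _]|[-> HZ _]|[HX HZ]].
- rewrite HZ in H1 H2; split => //; lia.
- rewrite HZ in H1 H2; have := H2 isT; lia.
- rewrite HZ in H1 H2; have : 0 < (lv X).+1 by []. move=> /H2; lia.
Qed.

Lemma lv_le X : lv X <= kappa.
Proof. by rewrite /lv -ltnS ltn_ord. Qed.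

Lemma safe_far X w F : up X w F -> kappa < size w ->
  [/\ lv X = 0, q1 X \notin dfinal A1 & q2 X \notin dfinal A2].
Proof.
case: w => [|a w] //= /up_cons [Y [/rawE [_ _ _ _ H] HY]] Hk.
have [H1 H2] := upL HY; have := lv_le F.
case: H => [[-> _ ? ?] //|[_ HY1 _]|[HX HYX]].
- by rewrite H2 ?HY1 // add1n => /(leq_trans Hk); rewrite ltnn.
- by rewrite H2 HYX ?HYX // addSnnS => /(leq_trans (leq_trans Hk (leq_addl _ _))); rewrite ltnn.
Qed.

Lemma switch Y al F : up Y al F -> size al = kappa -> lv F = kappa -> 0 < kappa ->
  (q1 Y \in dfinal A1) || (q2 Y \in dfinal A2).
Proof.
case: al => [|a al] /=; first by move=> _ <-.
case/up_cons => [Z [/rawE [_ _ _ _ H] HZ]] Hs HF _.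
have [H1 H2] := upL HZ.
case: H => [[_ HZ0 _ _]|[_ _ ->] //|[HX HZX]].
- simpl in Hs; lia.
- simpl in Hs; have := H2; rewrite HZX => /(_ isT); lia.
Qed.


Lemma rcat_cancel (T : Type) (s1 s2 t1 t2 : seq T) :
  s1 ++ t1 = s2 ++ t2 -> size t1 = size t2 -> s1 = s2.
Proof.
move=> E Ht; have Hs : size s1 = size s2.
  by move/(congr1 size): E; rewrite !size_cat Ht => /addIn.
by move/(congr1 (take (size s1))): E; rewrite take_size_cat // take_size_cat.
Qed.

Lemma lcat_cancel (T : Type) (s1 s2 t1 t2 : seq T) :
  s1 ++ t1 = s2 ++ t2 -> size s1 = size s2 -> t1 = t2.
Proof.
by move=> E Hs; move/(congr1 (drop (size s1))): E; rewrite drop_size_cat // drop_size_cat.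
Qed.

Lemma size_wbar w : size (wb w) = size w.
Proof. by rewrite /wbar size_rev size_map. Qed.

Section Main.
Variables (bar_inv : involutive bar) (kpos : 0 < kappa) (I X F : St) (u v w beta : seq Sigma).
Hypotheses (HI : initialSt bar I) (Hu : up I u X) (Hv : up X v X) (Hw : up X w F)
  (HF : lv F = kappa) (Hb1 : dtrans (Pof F).1 beta = q1 F)
  (Hb2 : dtrans (Pof F).2 (wb beta) = q2 F).

Lemma wbK : involutive wb.
Proof. by move=> x; rewrite /wbar map_rev revK -map_comp (eq_map bar_inv) map_id. Qed.

Definition vp m := flatten (nseq m v).
Lemma vpS m : vp m.+1 = v ++ vp m. Proof. by []. Qed.
Lemma vpD m d : vp (m + d) = vp m ++ vp d.
Proof. by elim: m => [|m IH] //=; rewrite addSn vpS IH catA. Qed.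
Lemma size_vp m : size (vp m) = m * size v.
Proof. by elim: m => [|m IH] //=; rewrite vpS size_cat IH mulSn. Qed.

Lemma up_vp m : up X (vp m) X.
Proof.
elim: m => [|m IH].
  exists [::]; split => //; exact: up_end Hv.
rewrite vpS; exact: up_cat Hv IH.
Qed.

Definition Xm m := u ++ vp m ++ w.

Lemma up_Xm m : up I (Xm m) F.
Proof. exact: up_cat Hu (up_cat (up_vp m) Hw). Qed.

Lemma P_Xm m : Pof F = (dtrans (dinit A1) (Xm m), dtrans (dinit A2) (Xm m)).
Proof. rewrite (upP (up_Xm m)) /Pof. by case: HI => _ [-> _]. Qed.

Lemma L1_Xm m Z : dtrans (dinit A1) (Xm m ++ beta ++ Z) = dtrans (q1 F) Z.
Proof. by rewrite -Hb1 (P_Xm m) /= -!dtrans_cat catA. Qed.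

Lemma L2_Xm m Z : dtrans (dinit A2) (Xm m ++ wb beta ++ Z) = dtrans (q2 F) Z.
Proof. by rewrite -Hb2 (P_Xm m) /= -!dtrans_cat catA. Qed.

Lemma safe_Xm m g : g + kappa < size (Xm m) ->
  dtrans (q1 F) (wb (drop g (Xm m))) \notin dfinal A1 /\
  dtrans (q2 F) (wb (drop g (Xm m))) \notin dfinal A2.
Proof.
move=> Hg; have := up_Xm m; rewrite -{1}(cat_take_drop g (Xm m)).
case/up_split => Z [_ HZ].
have [E1 E2] := upQ HZ.
case: (safe_far HZ) => [|_]; first by rewrite size_drop; lia.
by rewrite -E1 -E2; split.
Qed.

Lemma kappa_le m : kappa <= size (Xm m).
Proof.
have [H1 _] := upL (up_Xm m); case: HI => _ [_ HI0].
by move: H1; rewrite HF /lv HI0 add0n.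
Qed.

Local Notation H := (Hk bar kappa (dlang A1) (lbar bar (dlang A2))).

Lemma inH m : H (Xm m ++ beta ++ wb (Xm m)).
Proof.
set x := Xm m; set k := size x - kappa.
have Hk : kappa <= size x := kappa_le m.
exists (take k x), (drop k x), beta.
have Hsz : size (drop k x) = kappa by rewrite size_drop /k; lia.
split.
  by rewrite [RHS]catA cat_take_drop -wbar_cat cat_take_drop.
split; first by rewrite Hsz.
have := up_Xm m; rewrite -/x -{1}(cat_take_drop k x); case/up_split => Y [_ HY].
have [E1 E2] := upQ HY.
case/orP: (switch HY Hsz HF kpos) => HYF.
  by left; rewrite /dlang catA cat_take_drop /x L1_Xm -/x -E1.
right; exists (take k x ++ drop k x ++ wb beta ++ wb (drop k x)); split.
  by rewrite /dlang catA cat_take_drop /x L2_Xm -/x -E2.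
by rewrite !wbar_cat !wbK !catA.
Qed.

Lemma notH m d : size w <= d * size v ->
  H (Xm (m + d) ++ beta ++ wb (Xm m)) -> prefix w (vp d).
Proof.
move=> Hd.
set Xq := Xm m; set Xp := Xm (m + d).
have HX : Xp = (u ++ vp m) ++ (vp d ++ w) by rewrite /Xp /Xm vpD !catA.
have HXq : Xq = (u ++ vp m) ++ w by rewrite /Xq /Xm !catA.
have Hsz : size Xq <= size Xp.
  by rewrite HX HXq !size_cat size_vp; lia.
case=> g [al [be [Ey [Hal Hc]]]].
case: (ltnP (size g + kappa) (size Xq)) => Hg.
- have Hg' : size g <= size Xq by lia.
  have Hg'' : size g + kappa < size Xp by lia.
  have Ecut : g ++ al ++ be ++ wb al = Xp ++ beta ++ wb (drop (size g) Xq).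
    apply: (@rcat_cancel _ _ _ (wb g) (wb (take (size g) Xq))).
      transitivity (Xp ++ beta ++ wb Xq); first by rewrite Ey -!catA.
      by rewrite -catA -catA -wbar_cat cat_take_drop.
    by rewrite !size_wbar size_takel.
  case: Hc => [HL1|[u0 [Hu0 Eu0]]].
    move: HL1; rewrite /dlang Ecut /Xp L1_Xm.
    by have [S1 _] := safe_Xm Hg; rewrite (negbTE S1).
  have Eu : u0 ++ wb g = Xq ++ wb beta ++ wb Xp.
    have Eu0' : u0 = wb (al ++ be ++ wb al ++ wb g) by rewrite Eu0 wbK.
    by rewrite Eu0' -wbar_cat -Ey wbar_cat (wbar_cat beta) wbK catA.
  have Eu' : u0 = Xq ++ wb beta ++ wb (drop (size g) Xp).
    apply: (@rcat_cancel _ _ _ (wb g) (wb (take (size g) Xp))).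
      by rewrite Eu -!catA -(wbar_cat (take (size g) Xp)) cat_take_drop.
    by rewrite !size_wbar size_takel //; lia.
  move: Hu0; rewrite /dlang Eu' /Xq L2_Xm.
  by have [_ S2] := safe_Xm Hg''; rewrite (negbTE S2).
- have Hga : size Xq <= size (g ++ al) by rewrite size_cat; lia.
  have E1 : take (size Xq) (Xp ++ beta ++ wb Xq) = take (size Xq) (g ++ al).
    by rewrite Ey catA takel_cat.
  have E2 : take (size Xq) (wb (Xp ++ beta ++ wb Xq)) = take (size Xq) (g ++ al).
    by rewrite Ey !wbar_cat !wbK -!catA catA takel_cat.
  move: E2; rewrite -E1 (wbar_cat Xp) (wbar_cat beta) wbK -catA take_size_cat //.
  rewrite takel_cat // HX HXq.
  set P := u ++ vp m; rewrite size_cat takeD take_size_cat // drop_size_cat //.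
  move/lcat_cancel => /(_ erefl) E.
  by rewrite prefixE; apply/eqP; rewrite {2}E takel_cat // size_vp.
Qed.

Lemma mainG : v != [::] -> regular H -> exists n, prefix w (flatten (nseq n.+1 v)).
Proof.
move=> Hv0 [B HB].
set c := (size w).+1.
pose fm i := dtrans (dinit B) (u ++ vp (c * i)).
set s := map fm (iota 0 (#|dstate B|).+1).
have : ~~ uniq s.
  apply/negP => /card_uniqP Hs.
  have := max_card (mem s); rewrite Hs size_map size_iota ltnn //.
case/(uniqPn (dinit B)) => i [j [Hij Hj E]].
rewrite size_map size_iota in Hj.
rewrite !(nth_map 0) ?size_iota ?(ltn_trans Hij) // !nth_iota ?(ltn_trans Hij) // !add0n in E.
have Hin := inH (c * i).
have Ef : forall k Z, dtrans (dinit B) ((u ++ vp (c * k)) ++ Z) = dtrans (fm k) Z.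
  by move=> k Z; rewrite dtrans_cat.
have Eq k R : (u ++ vp k ++ w) ++ R = (u ++ vp k) ++ (w ++ R) by rewrite !catA.
move/HB: Hin; rewrite /dlang /Xm Eq Ef E -Ef -Eq.
have -> : c * j = c * i + c * (j - i) by rewrite -mulnDr subnKC // ltnW.
move=> Hd; have : dlang B (Xm (c * i + c * (j - i)) ++ beta ++ wb (Xm (c * i))) by [].
move/HB => Hh.
have Hv1 : 0 < size v by case: (v) Hv0.
have Hji : 0 < j - i by rewrite subn_gt0.
have Hp : prefix w (vp (c * (j - i))) by apply: (notH _ Hh); rewrite /c; nia.
by exists (c * (j - i)).-1; rewrite prednK // muln_gt0 Hji.
Qed.

End Main.

Local Notation pA := (@pathA _ bar kappa A1 A2).

Lemma inA_isState (X : St) : inA bar X -> isState bar X.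
Proof. by case=> [[I [w [_ /up_end]]]]. Qed.

Lemma arcA_node a (X Y : St) : arcA bar a X Y -> inA bar X /\ inA bar Y.
Proof. by case=> [? [? _]]. Qed.

Lemma pA_up X w Y : pA X w Y -> up X w Y.
Proof.
case=> xs [H E]; exists xs; split => //.
by apply: (grun_mono _ _ H) => [Z|a Z Z' [_ [_ ?]]] //; apply: inA_isState.
Qed.

Lemma isState_bridge (Y : St) : isState bar Y ->
  exists beta, dtrans (Pof Y).1 beta = q1 Y /\ dtrans (Pof Y).2 (wb beta) = q2 Y.
Proof.
by case: Y => [[[P r1] r2] l] [_ [beta [E1 E2]]]; exists beta.
Qed.

Lemma partG (bar_inv : involutive bar) (kpos : 0 < kappa)
  (Hreg : regular (Hk bar kappa (dlang A1) (lbar bar (dlang A2))))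
  X v w F : inA bar X -> v != [::] -> pA X v X -> pA X w F -> finalSt F ->
  exists n, prefix w (flatten (nseq n.+1 v)).
Proof.
move=> HX Hv0 /pA_up Hv /pA_up Hw HF.
case: (HX) => [[I [u [HI Hu]]] _].
have [beta [Hb1 Hb2]] := isState_bridge (up_end Hw).
exact: (mainG bar_inv kpos HI Hu Hv Hw HF Hb1 Hb2 Hv0 Hreg).
Qed.


Local Notation rA := (@runA _ bar kappa A1 A2).

Lemma pA_cat (X Y Z : St) w1 w2 : pA X w1 Y -> pA Y w2 Z -> pA X (w1 ++ w2) Z.
Proof. move=> H1 H2; exact: (@gpath_cat _ _ _ _ (@arcA_node) X w1 w2 Y Z H1 H2). Qed.

Lemma pA_start (X Y : St) w : pA X w Y -> inA bar X.
Proof. case=> xs [H _]; exact: (@grun_node _ _ _ _ (@arcA_node) X w xs H). Qed.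

Lemma pA_nil (X Y : St) : pA X [::] Y -> X = Y.
Proof. by move=> H; case: (gpath_nil H). Qed.

Lemma rA_cat (X : St) w1 w2 xs1 xs2 : size xs1 = size w1 ->
  rA X (w1 ++ w2) (xs1 ++ xs2) <-> rA X w1 xs1 /\ rA (last X xs1) w2 xs2.
Proof. exact: (@grun_cat _ _ _ _ (@arcA_node) X w1 w2 xs1 xs2). Qed.

Lemma rA_size (X : St) w xs : rA X w xs -> size xs = size w.
Proof. exact: grun_size. Qed.

Lemma rA_pA (X : St) w xs : rA X w xs -> pA X w (last X xs).
Proof. by move=> H; exists xs. Qed.

Lemma last_take_nth (T : Type) (x : T) (s : seq T) k : k < size s ->
  last x (take k.+1 s) = nth x s k.
Proof.
move=> Hk; rewrite (last_nth x) size_takel //=.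
by rewrite nth_take.
Qed.

Lemma rA_split (X : St) w xs k : rA X w xs -> k < size xs ->
  exists w1 w2, [/\ w = w1 ++ w2, size w1 = k.+1, pA X w1 (nth X xs k),
     rA (nth X xs k) w2 (drop k.+1 xs) & last (nth X xs k) (drop k.+1 xs) = last X xs].
Proof.
move=> H Hk; have Hs := rA_size H.
have Hs1 : size (take k.+1 xs) = size (take k.+1 w) by rewrite !size_takel // -Hs.
move: H; rewrite -{1}(cat_take_drop k.+1 w) -{1}(cat_take_drop k.+1 xs).
case/(rA_cat _ _ _ Hs1) => H1 H2.
exists (take k.+1 w), (drop k.+1 w); rewrite -last_take_nth //; split => //.
- by rewrite cat_take_drop.
- by rewrite size_takel // -Hs.
- exact: rA_pA H1.
- by rewrite -last_cat cat_take_drop.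
Qed.

Lemma rA_uniq (X : St) w xs1 xs2 : rA X w xs1 -> rA X w xs2 ->
  last X xs1 = last X xs2 -> xs1 = xs2.
Proof.
elim/last_ind: w xs1 xs2 => [|w a IH] xs1 xs2 H1 H2.
  by move: (rA_size H1) (rA_size H2); case: xs1 {H1}; case: xs2 {H2}.
have := rA_size H1; have := rA_size H2.
case/lastP: xs1 H1 => [|ys1 Z1]; first by rewrite size_rcons.
case/lastP: xs2 H2 => [|ys2 Z2]; first by rewrite size_rcons.
rewrite !size_rcons => H2 H1 /eqP; rewrite eqSS => /eqP E2 /eqP; rewrite eqSS => /eqP E1.
rewrite !last_rcons => EZ; subst Z2.
have S1 : size ys1 = size w by [].
have S2 : size ys2 = size w by [].
move: H1 H2; rewrite -!cats1 => H1 H2.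
case/(rA_cat _ _ _ S1): H1 => R1 [A1' _].
case/(rA_cat _ _ _ S2): H2 => R2 [A2' _].
have EY : last X ys1 = last X ys2.
  have [_ [_ RA1]] := A1'; have [_ [_ RA2]] := A2'.
  have [_ _ _ [Q11 Q12] _] := rawE RA1; have [_ _ _ [Q21 Q22] _] := rawE RA2.
  have L1 := raw_lv RA1; have L2 := raw_lv RA2.
  apply: St_eq.
  - by rewrite (upP (pA_up (rA_pA R1))) (upP (pA_up (rA_pA R2))).
  - by rewrite Q11 Q21.
  - by rewrite Q12 Q22.
  - by rewrite L1 L2.
by rewrite (IH _ _ R1 R2 EY).
Qed.

Lemma rA_pow (X : St) w xs k : inA bar X -> rA X w xs -> last X xs = X ->
  rA X (flatten (nseq k w)) (flatten (nseq k xs)) /\ last X (flatten (nseq k xs)) = X.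
Proof.
move=> HX H E; elim: k => [|k [IH1 IH2]] //=.
split; first by apply/rA_cat; [exact: rA_size H| rewrite E].
by rewrite last_cat E.
Qed.

Lemma pA_pow (X : St) w k : inA bar X -> pA X w X -> pA X (flatten (nseq k w)) X.
Proof.
move=> HX [xs [H E]]; have [H1 H2] := rA_pow k HX H E.
by exists (flatten (nseq k xs)).
Qed.

Lemma size_fn (T : Type) (s : seq T) k : size (flatten (nseq k s)) = k * size s.
Proof. by elim: k => [|k IH] //=; rewrite size_cat IH mulSn. Qed.

Lemma mem_flatten_nseq (T : eqType) (x : T) (s : seq T) k : 0 < k ->
  (x \in flatten (nseq k s)) = (x \in s).
Proof. by move=> Hk; rewrite -mem_undup undup_flatten_nseq // mem_undup. Qed.


Lemma final_main (bar_inv : involutive bar) (kpos : 0 < kappa)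
  (Hreg : regular (Hk bar kappa (dlang A1) (lbar bar (dlang A2))))
  (s : {set St}) (Hs : nontrivial_sccA bar s)
  (As : St) (HAs : As \in s)
  (vs : seq Sigma) (Hvs : shortest_loop bar As vs) :
  (forall (w : seq Sigma) (F : St),
      pA As w F -> finalSt F ->
      exists n, prefix w (flatten (nseq n.+1 vs))) /\
  (forall v, shortest_loop bar As v -> v = vs) /\
  (forall xs, rA As vs xs -> last As xs = As ->
      forall B, B \in s -> B != As -> count_mem B xs = 1) /\
  size vs = #|s|.
Proof.
case: Hvs => Hv0 [Hvl Hmin].
have HinA : inA bar As := pA_start Hvl.
have Gen : forall w F, up As w F -> finalSt F -> exists n, prefix w (flatten (nseq n.+1 vs)).
  move=> w F Hw HF; case: (HinA) => [[I [u [HI Hu]]] _].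
  have [beta [Hb1 Hb2]] := isState_bridge (up_end Hw).
  exact: (mainG bar_inv kpos HI Hu (pA_up Hvl) Hw HF Hb1 Hb2 Hv0 Hreg).
have [F0 [w0 [HF0 Hw0]]] := HinA.2.
case: Hs => [[X0 [HX0 Hsc]] _].
have [[p0 HP0] [q0 HQ0]] := (proj1 (Hsc As) HAs).
have U : forall xs, rA As vs xs -> last As xs = As -> uniq xs.
  move=> xs Hr Hl; case Hu: (uniq xs) => //.
  move/negbT: Hu => /(uniqPn As) [i [j [Hij Hj E]]].
  have [w1 [w2 [Ew Hs1 P1 R2 L2]]] := rA_split Hr (ltn_trans Hij Hj).
  have Hk : j - i.+1 < size (drop i.+1 xs) by rewrite size_drop ltn_sub2r // (leq_ltn_trans Hij Hj).
  have [w3 [w4 [Ew2 Hs3 P3 R4 L4]]] := rA_split R2 Hk.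
  have EY : nth (nth As xs i) (drop i.+1 xs) (j - i.+1) = nth As xs i.
    by rewrite nth_drop subnKC // (set_nth_default As) // E.
  rewrite EY in P3 R4 L4.
  have Hloop : pA As (w1 ++ w4) As.
    apply: pA_cat P1 _; have H4 := rA_pA R4; by rewrite L4 L2 Hl in H4.
  have Hne : w1 ++ w4 != [::] by rewrite -size_eq0 size_cat Hs1.
  have := Hmin _ Hne Hloop.
  by rewrite Ew Ew2 !size_cat Hs3 leq_add2l addSn ltnNge leq_addl.
have M : forall xs, rA As vs xs -> last As xs = As -> forall Y, Y \in xs -> Y \in s.
  move=> xs Hr Hl Y /(nthP As) [k Hk <-].
  have [w1 [w2 [_ _ P1 R2 L2]]] := rA_split Hr Hk.
  apply/Hsc; split.
    by exists (p0 ++ w1); apply: pA_cat P1.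
  exists (w2 ++ q0); apply: pA_cat HQ0; have H2 := rA_pA R2; by rewrite L2 Hl in H2.
have C : forall xs, rA As vs xs -> last As xs = As -> forall B, B \in s -> B != As -> B \in xs.
  move=> xs Hr Hl B HB HBA.
  have [[p1 Hp1] [q1' Hq1']] := proj1 (Hsc B) HB.
  have Hp : pA As (q0 ++ p1) B := pA_cat HQ0 Hp1.
  have Hq : pA B (q1' ++ p0) As := pA_cat Hq1' HP0.
  set p := q0 ++ p1 in Hp; set q := q1' ++ p0 in Hq.
  have Hp0 : p != [::].
    by apply/eqP => E; rewrite E in Hp; move/eqP: HBA; apply; rewrite (pA_nil Hp).
  have Hpq : pA As (p ++ q) As := pA_cat Hp Hq.
  set L := size vs.
  have HL : 0 < L by rewrite lt0n size_eq0.
  set W := flatten (nseq L (p ++ q)).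
  have HW : pA As W As := pA_pow L HinA Hpq.
  have [n Hn] := Gen _ _ (up_cat (pA_up HW) Hw0) HF0.
  have HWp := catl_prefix Hn.
  have Hsz := size_prefix HWp.
  rewrite /W !size_fn in Hsz.
  have Hle : size (p ++ q) <= n.+1.
    by rewrite mulnC leq_pmul2r in Hsz.
  have EW : W = flatten (nseq (size (p ++ q)) vs).
    move: HWp; rewrite prefixE => /eqP <-.
    rewrite -(subnKC Hle) nseqD flatten_cat take_size_cat //.
    by rewrite /W !size_fn mulnC.
  case: Hp => [ps [Rps Lps]]; case: Hq => [qs [Rqs Lqs]].
  have Rpq : rA As (p ++ q) (ps ++ qs).
    by apply/rA_cat; [exact: rA_size Rps | rewrite Lps].
  have Lpq : last As (ps ++ qs) = As by rewrite last_cat Lps.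
  have [R1 L1] := rA_pow L HinA Rpq Lpq.
  have [R2 L2] := rA_pow (size (p ++ q)) HinA Hr Hl.
  rewrite -/W EW in R1.
  have Eruns := rA_uniq R1 R2 (etrans L1 (esym L2)).
  have HBps : B \in ps.
    have := mem_last As ps; rewrite Lps inE (negbTE HBA) /=.
    by [].
  have Hpq0 : 0 < size (p ++ q) by rewrite size_cat addn_gt0 lt0n size_eq0 Hp0.
  have : B \in flatten (nseq L (ps ++ qs)) by rewrite mem_flatten_nseq // mem_cat HBps.
  by rewrite Eruns mem_flatten_nseq.
split.
  by move=> w F /pA_up; apply: Gen.
split.
  move=> v [Hv0' [Hvl' Hmin']].
  have Hsz : size v = size vs by apply/eqP; rewrite eqn_leq Hmin // Hmin'.
  have [n Hn] := Gen _ _ (up_cat (pA_up Hvl') Hw0) HF0.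
  move: (catl_prefix Hn); rewrite prefixE /= Hsz take_size_cat // => /eqP.
  by [].
split.
  move=> xs Hr Hl B HB HBA.
  by rewrite count_uniq_mem ?(U _ Hr Hl) // (C _ Hr Hl B HB HBA).
case: (Hvl) => xs0 [Hr0 Hl0].
have Heq : s =i xs0.
  move=> Y; apply/idP/idP; last exact: M _ Hr0 Hl0 Y.
  move=> HY; case: (eqVneq Y As) => [->|HYA]; last exact: C _ Hr0 Hl0 Y HY HYA.
  case: xs0 Hr0 Hl0 => [|Z zs] Hr0 Hl0.
    by move: (rA_size Hr0); case: (vs) Hv0.
  by rewrite -{1}Hl0 /= mem_last.
rewrite (eq_card Heq) (card_uniqP (U _ Hr0 Hl0)).
by rewrite (rA_size Hr0).
Qed.

End Spec.

Theorem lemma5 (Sigma : finType) (bar : Sigma -> Sigma)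
  (bar_inv : involutive bar) (card_Sigma : 2 <= #|Sigma|)
  (kappa : nat) (kappa_pos : 0 < kappa)
  (A1 A2 : dfa Sigma)
  (Hreg : regular (Hk bar kappa (dlang A1) (lbar bar (dlang A2))))
  (s : {set St kappa A1 A2}) (Hs : nontrivial_sccA bar s)
  (As : St kappa A1 A2) (HAs : As \in s)
  (vs : seq Sigma) (Hvs : shortest_loop bar As vs) :
  (forall (w : seq Sigma) (F : St kappa A1 A2),
      pathA bar As w F -> finalSt F ->
      exists n, prefix w (flatten (nseq n.+1 vs))) /\
  (forall v, shortest_loop bar As v -> v = vs) /\
  (forall xs, runA bar As vs xs -> last As xs = As ->
      forall B, B \in s -> B != As -> count_mem B xs = 1) /\
  size vs = #|s|.
Proof.
exact: (final_main bar_inv kappa_pos Hreg Hs HAs Hvs).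
Qed.
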